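(* Let $X$ be a real Banach space with $\dim X\ge 2$. (i) If $S_P(X)=\tfrac12$, then $X$ is not uniformly convex. (ii) If $S_P(X)=\tfrac12$ and $X$ is finite-dimensional, then $X$ is not strictly convex.
   Context: For a real Banach space $X$ with unit sphere $S_X$, the P-angle constant is $S_P(X)=\sup\left\{\frac{\|x+y\|^2+\|x-y\|^2-4}{2\|x+y\|\,\|x-y\|}: x,y\in S_X,\ x\neq \pm y\right\}$. $X$ is uniformly convex if for every $\varepsilon\in(0,2]$ there is $\delta>0$ such that $x,y\in S_X$ and $\|x-y\|\ge\varepsilon$ imply $\frac{\|x+y\|}{2}\le 1-\delta$. $X$ is strictly convex if $x,y\in S_X$, $x\ne y$ imply $\|x+y\|<2$. *)

(* Defs.v *)
From HB Require Import structures.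
From mathcomp Require Import all_boot all_order all_algebra.
From mathcomp Require Import all_classical all_reals all_analysis.
Set Implicit Arguments. Unset Strict Implicit. Unset Printing Implicit Defensive.
Import Order.TTheory GRing.Theory Num.Theory.
Import numFieldNormedType.Exports.
Local Open Scope classical_set_scope.
Local Open Scope ring_scope.

Definition P_angle_constant (R : realType) (X : normedModType R) : \bar R :=
  ereal_sup [set r : \bar R | exists x y : X,
     [/\ `|x| = 1, `|y| = 1, x != y, x != - y &
      r = ((`|x + y| ^+ 2 + `|x - y| ^+ 2 - 4) /
           (2 * `|x + y| * `|x - y|))%:E]].

Definition uniformly_convex (R : realType) (X : normedModType R) : Prop :=
  forall eps : R, 0 < eps <= 2 ->
    exists2 delta : R, 0 < delta &
      forall x y : X, `|x| = 1 -> `|y| = 1 -> eps <= `|x - y| ->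
        `|x + y| / 2 <= 1 - delta.

Definition strictly_convex (R : realType) (X : normedModType R) : Prop :=
  forall x y : X, `|x| = 1 -> `|y| = 1 -> x != y -> `|x + y| < 2.

Definition dim_ge2 (R : realType) (X : normedModType R) : Prop :=
  exists x y : X, forall a b : R, a *: x + b *: y = 0 -> a = 0 /\ b = 0.

Definition finite_dim (R : realType) (X : normedModType R) : Prop :=
  exists (n : nat) (e : 'I_n -> X),
    forall x : X, exists c : 'I_n -> R, x = \sum_(i < n) c i *: e i.

(* Main.v *)
Require Import Defs.
From HB Require Import structures.
From mathcomp Require Import all_boot all_order all_algebra.
From mathcomp Require Import all_classical all_reals all_analysis.
From mathcomp Require Import ring lra.
Import Order.TTheory GRing.Theory Num.Theory.
Import numFieldNormedType.Exports.
Local Open Scope ring_scope.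

Lemma f_le (R : realType) (a b : R) : 0 < a -> 0 < b -> a <= 2 -> b <= 2 ->
  (a ^+ 2 + b ^+ 2 - 4) / (2 * a * b) <= a / 4.
Proof.
move=> a0 b0 a2 b2.
rewrite ler_pdivrMr; last by rewrite !mulr_gt0.
have h : (b - 2) * (b + 2 - a ^+ 2 / 2) <= 0.
  apply: mulr_le0_ge0; first by lra.
  have : a ^+ 2 <= 4 by nra.
  lra.
nra.
Qed.

Lemma core (R : realType) (X : normedModType R) :
  P_angle_constant X = (2^-1 : R)%:E -> forall eps : R, 0 < eps ->
  exists x y : X, [/\ `|x| = 1, `|y| = 1, 2 - eps < `|x + y| & 2 - eps < `|x - y|].
Proof.
move=> hP eps eps0.
have : ((2^-1 - eps / 4)%:E < P_angle_constant X)%E.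
  by rewrite hP lte_fin; lra.
move=> /ereal_sup_gt [r [x [y [x1 y1 xy xny ->]]]].
rewrite lte_fin => hlt.
exists x, y.
have ha2 : `|x + y| <= 2 by rewrite (le_trans (ler_normD _ _)) // x1 y1.
have hb2 : `|x - y| <= 2 by rewrite (le_trans (ler_normB _ _)) // x1 y1.
have ha0 : 0 < `|x + y|.
  by rewrite normr_gt0 addr_eq0.
have hb0 : 0 < `|x - y|.
  by rewrite normr_gt0 subr_eq0.
have h1 := @f_le R _ _ ha0 hb0 ha2 hb2.
have h2 := @f_le R _ _ hb0 ha0 hb2 ha2.
have e : `|x - y| ^+ 2 + `|x + y| ^+ 2 - 4 = `|x + y| ^+ 2 + `|x - y| ^+ 2 - 4 by ring.
have e2 : 2 * `|x - y| * `|x + y| = 2 * `|x + y| * `|x - y| by ring.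
rewrite e e2 in h2.
split => //; lra.
Qed.

Lemma part1 (R : realType) (X : normedModType R) :
  P_angle_constant X = (2^-1 : R)%:E -> ~ uniformly_convex X.
Proof.
move=> hP hU.
have [d d0 hd] := hU 1 ltac:(lra).
have mpos : 0 < Num.min 1 d by rewrite lt_min; apply/andP; split=> //; lra.
have [x [y [x1 y1 ha hb]]] := @core R X hP _ mpos.
have m1 : Num.min 1 d <= 1 by rewrite ge_min lexx.
have m2 : Num.min 1 d <= d by rewrite ge_min lexx orbT.
have := hd x y x1 y1 ltac:(lra).
lra.
Qed.

Definition spanning {R : realType} {X : normedModType R} {n} (e : 'I_n -> X) :=
  forall x : X, exists c : 'I_n -> R, x = \sum_(i < n) c i *: e i.
Definition indep {R : realType} {X : normedModType R} {n} (e : 'I_n -> X) :=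
  forall c : 'I_n -> R, \sum_(i < n) c i *: e i = 0 -> forall i, c i = 0.

Lemma basis_exists {R : realType} {X : normedModType R} {n} (e : 'I_n -> X) :
  spanning e -> exists n' (e' : 'I_n' -> X), spanning e' /\ indep e'.
Proof.
elim: n e => [|n IH] e hs.
  exists 0%N, e; split => // c _ [] //.
have [hi|hni] := pselect (indep e).
  by exists n.+1, e.
have [c [hc]] : exists c : 'I_n.+1 -> R, \sum_(i < n.+1) c i *: e i = 0 /\ exists j, c j != 0.
  apply: contra_notP hni => H c hc i; apply: contra_notP H => ci.
  by exists c; split => //; exists i; apply/eqP.
move=> [j cj].
apply: (IH (fun k => e (lift j k))) => x.
have [d ->] := hs x.
have hc' := hc; rewrite (bigD1_ord j) //= in hc'.
rewrite (bigD1_ord j) //=.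
exists (fun k => d (lift j k) - d j / c j * c (lift j k)).
rewrite [RHS](eq_bigr (fun i => d (lift j i) *: e (lift j i) - (d j / c j) *: (c (lift j i) *: e (lift j i)))); last by move=> i _ /=; rewrite scalerBl scalerA.
rewrite sumrB -scaler_sumr.
have -> : \sum_(i < n) c (lift j i) *: e (lift j i) = - (c j *: e j).
  by apply/eqP; rewrite -addr_eq0 addrC hc'.
rewrite scalerN opprK scalerA mulrVK ?unitfE //.
by rewrite addrC.
Qed.

Definition phi {R : realType} {X : normedModType R} {n} (e : 'I_n -> X)
  (a : 'rV[R]_n) : X := \sum_(i < n) a ord0 i *: e i.

Lemma phi_cont {R : realType} {X : normedModType R} {n} (e : 'I_n -> X) :
  continuous (phi e).
Proof.
move=> a.
have -> : phi e = \sum_(i < n) (fun b : 'rV[R]_n => b ord0 i *: e i).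
  by rewrite fct_sumE.
elim/big_ind: _ => //.
- exact: cst_continuous.
- by move=> f g hf hg; apply: continuousD.
- move=> i _; apply: continuousZr_tmp; exact: coord_continuous.
Qed.

Lemma phiZ {R : realType} {X : normedModType R} {n} (e : 'I_n -> X) k a :
  phi e (k *: a) = k *: phi e a.
Proof.
rewrite /phi scaler_sumr; apply: eq_bigr => i _; by rewrite mxE scalerA.
Qed.

Lemma lower_bound {R : realType} {X : normedModType R} {n} (e : 'I_n -> X) :
  indep e -> exists2 m : R, 0 < m & forall a, m * `|a| <= `|phi e a|.
Proof.
move=> hi.
pose S := [set a : 'rV[R]_n | `|a| = 1]%classic.
have key : forall m : R, 0 < m -> (forall b, S b -> m <= `|phi e b|) ->
    forall a, m * `|a| <= `|phi e a|.
  move=> m m0 hm a.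
  have [->|a0] := eqVneq a 0; first by rewrite normr0 mulr0.
  have na : 0 < `|a| by rewrite normr_gt0.
  have Sb : S (`|a|^-1 *: a).
    by rewrite /S /= normrZ normfV normr_id mulVf // gt_eqF.
  have := hm _ Sb; rewrite phiZ normrZ normfV normr_id.
  by rewrite ler_pdivlMl // mulrC.
have [[c Sc]|nS] := pselect (S !=set0)%classic; last first.
  exists 1 => //; apply: key => // b Sb.
  by exfalso; apply: nS; exists b.
have cS : compact S.
  apply: bounded_closed_compact.
    exists 1; split => // M M1 x /= ->; exact: ltW.
  exact: (proj1 (continuous_closedP (Num.Def.normr : 'rV[R]_n -> R)) (@norm_continuous _ _) _ (@closed_eq R 1)).
have gc : continuous (fun a => `|phi e a|).
  move=> a; apply: (continuous_comp (phi_cont e a)); exact: norm_continuous.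
have [c0 /set_mem Sc0 hmin] := @compact_EVT_min _ R (fun a => `|phi e a|) S
  (ex_intro _ c Sc) cS (continuous_subspaceT gc).
have mpos : 0 < `|phi e c0|.
  rewrite normr_gt0; apply/negP => /eqP h.
  have c00 : c0 = 0.
    apply/matrixP => i j; rewrite (ord1 i) mxE; exact: hi h j.
  by move: Sc0; rewrite /S /= c00 normr0 => /eqP; rewrite eq_sym oner_eq0.
exists `|phi e c0| => //.
apply: key => //.
by move=> b Sb; apply: hmin; apply/mem_set.
Qed.

Lemma part2 {R : realType} {X : normedModType R} :
  P_angle_constant X = (2^-1 : R)%:E -> finite_dim X -> ~ strictly_convex X.
Proof.
move=> hP [n0 [e0 hs0]] hsc.
have [n [e [hs hi]]] := @basis_exists R X _ e0 hs0.
have [m m0 hm] := lower_bound e hi.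
pose M := m^-1.
have rep : forall x : X, `|x| = 1 -> exists a, phi e a = x /\ `|a| <= M.
  move=> x x1; have [c xc] := hs x.
  exists (\row_i c i).
  have pa : phi e (\row_i c i) = x.
    by rewrite xc /phi; apply: eq_bigr => i _; rewrite mxE.
  split => //.
  have := hm (\row_i c i); rewrite pa x1 => h.
  by rewrite /M -(ler_pM2l m0) mulfV ?gt_eqF.
pose B := [set a : 'rV[R]_n | `|a| <= M]%classic.
have cB : compact B.
  apply: bounded_closed_compact.
    exists M; split; first exact: num_real.
    move=> K MK x /= xM; exact: (le_trans xM (ltW MK)).
  exact: (proj1 (continuous_closedP (Num.Def.normr : 'rV[R]_n -> R)) (@norm_continuous _ _) _ (@closed_le R M)).
pose T := ('rV[R]_n * 'rV[R]_n)%type.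
have fstc : continuous (fun p : T => p.1) := fun p => @cvg_fst _ _ _ _ _.
have sndc : continuous (fun p : T => p.2) := fun p => @cvg_snd _ _ _ _ _.
have g1 : continuous (fun p : T => phi e p.1).
  move=> p; apply: continuous_comp; [exact: fstc | exact: phi_cont].
have g2 : continuous (fun p : T => phi e p.2).
  move=> p; apply: continuous_comp; [exact: sndc | exact: phi_cont].
pose C := ((B `*` B) `&` [set p : T | `|phi e p.1| = 1 /\ `|phi e p.2| = 1])%classic.
have cC : compact C.
  apply: compact_closedI; first exact: compact_setX.
  apply: closedI.
    apply: (proj1 (continuous_closedP (fun p : T => `|phi e p.1|))) (@closed_eq R 1).
    move=> p; apply: (continuous_comp (g1 p)); exact: norm_continuous.
  apply: (proj1 (continuous_closedP (fun p : T => `|phi e p.2|))) (@closed_eq R 1).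
  move=> p; apply: (continuous_comp (g2 p)); exact: norm_continuous.
pose h := fun p : T => `|phi e p.1 + phi e p.2| + `|phi e p.1 - phi e p.2|.
have hc : continuous h.
  move=> p.
  have k1 : {for p, continuous (fun q : T => phi e q.1 + phi e q.2)}.
    exact: (@continuousD _ _ _ (fun q : T => phi e q.1) (fun q : T => phi e q.2) p (g1 p) (g2 p)).
  have k2 : {for p, continuous (fun q : T => phi e q.1 - phi e q.2)}.
    apply: (@continuousD _ _ _ (fun q : T => phi e q.1) (fun q : T => - phi e q.2) p (g1 p)).
    exact: (@continuousN _ _ _ (fun q : T => phi e q.2) p (g2 p)).
  have n1 : {for p, continuous (fun q : T => `|phi e q.1 + phi e q.2|)}.
    apply: continuous_comp; [exact: k1 | exact: norm_continuous].
  have n2 : {for p, continuous (fun q : T => `|phi e q.1 - phi e q.2|)}.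
    apply: continuous_comp; [exact: k2 | exact: norm_continuous].
  exact: (@continuousD _ _ _ _ _ p n1 n2).
have inC : forall x y : X, `|x| = 1 -> `|y| = 1 ->
    exists2 p, C p & (phi e p.1 = x /\ phi e p.2 = y).
  move=> x y x1 y1.
  have [a [pa aM]] := rep x x1; have [b [pb bM]] := rep y y1.
  exists (a, b) => //; split; first by split.
  by rewrite /= pa pb.
have [x1 [y1 [hx1 hy1 _ _]]] := @core R X hP 1 ltr01.
have [p1 Cp1 _] := inC x1 y1 hx1 hy1.
have [ps /set_mem Cps hmax] := @compact_EVT_max _ R h C (ex_intro _ p1 Cp1) cC
  (continuous_subspaceT hc).
have h4 : 4 <= h ps.
  rewrite leNgt; apply/negP => hlt.
  have eps0 : 0 < (4 - h ps) / 2 by lra.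
  have [x [y [hx hy ha hb]]] := @core R X hP _ eps0.
  have [q Cq [qx qy]] := inC x y hx hy.
  have := hmax q (mem_set Cq).
  move: hlt ha hb; rewrite /h /= qx qy; lra.
move: Cps => [_ [u1 u2]].
move: h4; rewrite /h => h4.
have hb2 : `|phi e ps.1 - phi e ps.2| <= 2.
  by rewrite (le_trans (ler_normB _ _)) // u1 u2.
have ha2 : `|phi e ps.1 + phi e ps.2| <= 2.
  by rewrite (le_trans (ler_normD _ _)) // u1 u2.
have neq : phi e ps.1 != phi e ps.2.
  apply/negP => /eqP eq; move: h4 ha2; rewrite eq subrr normr0; lra.
have := hsc _ _ u1 u2 neq; lra.
Qed.

Theorem proposition5p6 (R : realType) (X : completeNormedModType R) :
  dim_ge2 X ->
  (P_angle_constant X = (2^-1 : R)%:E -> ~ uniformly_convex X) /\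
  (P_angle_constant X = (2^-1 : R)%:E -> finite_dim X -> ~ strictly_convex X).
Proof.
move=> _; split; [exact: part1 | exact: part2].
Qed.
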